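(* Let $A$ and $\Lambda$ be as in the context and suppose $A^TA$ is singular. Let $d\ge 1$, $Q\in\mathbb R^{(m+1)\times d}$ (the matrix whose rows are the data points $\mathbf Q_0,\dots,\mathbf Q_m$), and let $P^{(0)}\in\mathbb R^{(n+1)\times d}$ be arbitrary. Define the sequence $$P^{(k+1)}=(I-\Lambda A^TA)P^{(k)}+\Lambda A^TQ,\qquad k=0,1,2,\dots,$$ where $I$ is the $(n+1)\times(n+1)$ identity. Then the sequence $(P^{(k)})_{k\ge 0}$ converges.
   Context: Let $n \le m$ be nonnegative integers. Let $B_0,\dots,B_n$ be real-valued basis functions (e.g. B-spline basis functions, tensor-product B-spline basis functions, or T-spline blending functions) that are nonnegative and form a partition of unity, i.e. $B_i(\mathbf t)\ge 0$ and $\sum_{i=0}^n B_i(\mathbf t)=1$ for every parameter $\mathbf t$. Let $\mathbf t_0,\dots,\mathbf t_m$ be parameter values assigned to data points $\mathbf Q_0,\dots,\mathbf Q_m$, and assume that for every $i$ there is some $j$ with $B_i(\mathbf t_j)\neq 0$. Let $A$ be the $(m+1)\times(n+1)$ matrix with entries $A_{ji}=B_i(\mathbf t_j)$. Let $\Lambda=\mathrm{diag}\big(1/\sum_{j=0}^m B_0(\mathbf t_j),\dots,1/\sum_{j=0}^m B_n(\mathbf t_j)\big)$, a diagonal matrix with positive diagonal entries. (This iteration is the LSPIA iteration for least-squares fitting.) *)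

(* Defs.v *)
(* real numbers from Stdlib Reals. Matrices are represented as
   functions nat -> nat -> R; only entries in the index ranges matter.
   sum_f_R0 f n = f 0 + ... + f n  (n+1 terms). *)
From Stdlib Require Import Reals.
Open Scope R_scope.

Definition Amat {T : Type} (B : nat -> T -> R) (t : nat -> T) (j i : nat) : R :=
  B i (t j).

(* Lambda_{ii} = 1 / sum_{j=0}^m B_i(t_j) *)
Definition lam {T : Type} (m : nat) (B : nat -> T -> R) (t : nat -> T) (i : nat) : R :=
  / sum_f_R0 (fun j => B i (t j)) m.

Definition AtA {T : Type} (m : nat) (B : nat -> T -> R) (t : nat -> T) (i l : nat) : R :=
  sum_f_R0 (fun j => Amat B t j i * Amat B t j l) m.

Definition sqmul (N : nat) (X Y : nat -> nat -> R) (i l : nat) : R :=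
  sum_f_R0 (fun k => X i k * Y k l) N.

Definition idm (i l : nat) : R := if Nat.eqb i l then 1 else 0.

Definition invertible (N : nat) (M : nat -> nat -> R) : Prop :=
  exists X : nat -> nat -> R,
    (forall i l, (i <= N)%nat -> (l <= N)%nat ->
       sqmul N M X i l = idm i l /\ sqmul N X M i l = idm i l).

Definition singular (N : nat) (M : nat -> nat -> R) : Prop := ~ invertible N M.

Definition lspia_step {T : Type} (n m : nat) (B : nat -> T -> R) (t : nat -> T)
    (Q P : nat -> nat -> R) : nat -> nat -> R :=
  fun i c =>
    sum_f_R0 (fun l => (idm i l - lam m B t i * AtA m B t i l) * P l c) n
    + lam m B t i * sum_f_R0 (fun j => Amat B t j i * Q j c) m.

Fixpoint lspia_seq {T : Type} (n m : nat) (B : nat -> T -> R) (t : nat -> T)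
    (Q P0 : nat -> nat -> R) (k : nat) : nat -> nat -> R :=
  match k with
  | O => P0
  | S k' => lspia_step n m B t Q (lspia_seq n m B t Q P0 k')
  end.

(* Main.v *)
Require Import Defs.
From Stdlib Require Import Reals Lra Lia.
Open Scope R_scope.

Module MC.
From mathcomp Require Import all_boot all_order all_algebra.
From mathcomp Require Import Rstruct zify.
Import Order.TTheory GRing.Theory Num.Theory.
Local Open Scope ring_scope.

Lemma normal_eq r p q (A : 'M[Rdefinitions.R]_(p,q)) (y : 'M_(r,p)) :
  exists z : 'M_(r,q), z *m (A^T *m A) = y *m A.
Proof.
have kerS : (kermx (A^T *m A) <= kermx A^T)%MS.
  apply/sub_kermxP.
  set V := kermx (A^T *m A) *m A^T.
  have VA : V *m A = 0 by rewrite /V -mulmxA mulmx_ker.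
  have VV : V *m V^T = 0 by rewrite /V trmx_mul trmxK mulmxA VA mul0mx.
  apply/matrixP => i j; rewrite (_ : (0 : 'M_(q,p)) i j = 0); last by rewrite mxE.
  move/matrixP: VV => /(_ i i) VV; rewrite !mxE in VV.
  have VV' : \sum_k V i k ^+ 2 = 0 by rewrite -[RHS]VV; apply eq_bigr => k _; rewrite !mxE expr2.
  have H : V i j ^+ 2 = 0 by apply: (psumr_eq0P _ VV') => // k _; apply: sqr_ge0.
  move/eqP: H; rewrite sqrf_eq0 => /eqP HH; exact HH.
have r1 := mxrankS kerS.
rewrite !mxrank_ker mxrank_tr in r1.
have r2 : (\rank A <= \rank (A^T *m A))%N.
  have h1 := rank_leq_col A. have h2 := rank_leq_col (A^T *m A).
  lia.
have sub1 : (A^T *m A <= A)%MS by apply: submxMl.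
have sub2 : (A <= A^T *m A)%MS.
  have := mxrank_leqif_sup sub1. case=> _ <-. by rewrite eqn_leq r2 mxrankS.
have : (y *m A <= A^T *m A)%MS by apply: submx_trans (submxMl _ _) sub2.
by case/submxP => z ->; exists z.
Qed.

Lemma sumE (f : nat -> Rdefinitions.R) n : sum_f_R0 f n = \sum_(i < n.+1) f i.
Proof.
elim: n => [|n IH]; first by rewrite big_ord1.
by rewrite big_ord_recr /= IH.
Qed.

Lemma normal_eq_fun (n m d : nat) (A : nat -> nat -> Rdefinitions.R) (Q : nat -> nat -> Rdefinitions.R) :
  exists U : nat -> nat -> Rdefinitions.R, forall c i : nat, Peano.le c d -> Peano.le i n ->
    sum_f_R0 (fun l => Rmult (sum_f_R0 (fun j => Rmult (A j i) (A j l)) m) (U c l)) n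
    = sum_f_R0 (fun j => Rmult (A j i) (Q j c)) m.
Proof.
have [z Hz] := @normal_eq d.+1 _ _ (\matrix_(j < m.+1, i < n.+1) A j i) (\matrix_(c < d.+1, j < m.+1) Q j c).
exists (fun c l => z (inord c) (inord l)) => c i /ssrnat.leP Hc /ssrnat.leP Hi.
move/matrixP: Hz => /(_ (inord c) (inord i)); rewrite !mxE => Hz.
have Hi' : (i < n.+1)%N by rewrite ltnS.
have Hc' : (c < d.+1)%N by rewrite ltnS.
rewrite sumE sumE.
rewrite (eq_bigr (fun l : 'I_n.+1 => z (inord c) l * ((\matrix_(j0 < m.+1, i0 < n.+1) A j0 i0)^T *m \matrix_(j0 < m.+1, i0 < n.+1) A j0 i0) l (inord i))).
  rewrite Hz; apply eq_bigr => j _; rewrite !mxE (inordK Hi') (inordK Hc'); by rewrite mulrC.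
move=> l _; rewrite inord_val sumE mulrC !mxE; congr (_ * _); apply eq_bigr => j _.
by rewrite !mxE (inordK Hi') mulrC.
Qed.
End MC.


Lemma sum_add (f g : nat -> R) N :
  sum_f_R0 (fun i => f i + g i) N = sum_f_R0 f N + sum_f_R0 g N.
Proof. induction N; simpl; [ring | rewrite IHN; ring]. Qed.

Lemma sum_sub (f g : nat -> R) N :
  sum_f_R0 (fun i => f i - g i) N = sum_f_R0 f N - sum_f_R0 g N.
Proof. induction N; simpl; [ring | rewrite IHN; ring]. Qed.

Lemma sum_scal (c : R) (f : nat -> R) N :
  sum_f_R0 (fun i => c * f i) N = c * sum_f_R0 f N.
Proof. induction N; simpl; [ring | rewrite IHN; ring]. Qed.

Lemma sum_scal_r (c : R) (f : nat -> R) N :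
  sum_f_R0 (fun i => f i * c) N = sum_f_R0 f N * c.
Proof. induction N; simpl; [ring | rewrite IHN; ring]. Qed.

Lemma sum_ext (f g : nat -> R) N :
  (forall i, (i <= N)%nat -> f i = g i) -> sum_f_R0 f N = sum_f_R0 g N.
Proof. apply sum_eq. Qed.

Lemma sum_le (f g : nat -> R) N :
  (forall i, (i <= N)%nat -> f i <= g i) -> sum_f_R0 f N <= sum_f_R0 g N.
Proof.
  induction N; intros H; simpl.
  - apply H; lia.
  - apply Rplus_le_compat; [apply IHN; intros; apply H; lia | apply H; lia].
Qed.

Lemma sum_nonneg (f : nat -> R) N :
  (forall i, (i <= N)%nat -> 0 <= f i) -> 0 <= sum_f_R0 f N.
Proof.
  intros H. replace 0 with (sum_f_R0 (fun _ => 0) N).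
  - apply sum_le; auto.
  - induction N; simpl; [ring | rewrite IHN; [ring | intros; apply H; lia]].
Qed.

Lemma sum_term (f : nat -> R) N k :
  (forall i, (i <= N)%nat -> 0 <= f i) -> (k <= N)%nat -> f k <= sum_f_R0 f N.
Proof.
  induction N; intros H Hk; simpl.
  - replace k with 0%nat by lia; lra.
  - destruct (Nat.eq_dec k (S N)) as [->|Hne].
    + assert (0 <= sum_f_R0 f N) by (apply sum_nonneg; intros; apply H; lia). lra.
    + assert (f k <= sum_f_R0 f N) by (apply IHN; [intros; apply H; lia | lia]).
      assert (0 <= f (S N)) by (apply H; lia). lra.
Qed.

Lemma sum_swap (f : nat -> nat -> R) N M :
  sum_f_R0 (fun i => sum_f_R0 (fun j => f i j) M) N =
  sum_f_R0 (fun j => sum_f_R0 (fun i => f i j) N) M.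
Proof.
  induction N; simpl.
  - reflexivity.
  - rewrite IHN. rewrite <- sum_add. reflexivity.
Qed.

Lemma sum_idm (v : nat -> R) N i :
  sum_f_R0 (fun l => idm i l * v l) N = if Nat.leb i N then v i else 0.
Proof.
  unfold idm. induction N; simpl.
  - destruct i; simpl; ring.
  - rewrite IHN. destruct (Nat.eqb_spec i (S N)) as [->|Hne].
    + replace (Nat.leb (S N) N) with false by (symmetry; apply Nat.leb_gt; lia).
      replace (Nat.leb (S N) (S N)) with true by (symmetry; apply Nat.leb_le; lia). ring.
    + destruct (Nat.leb_spec i N); destruct (Nat.leb_spec i (S N)); try lia; ring.
Qed.

Lemma jensen (a x : nat -> R) N :
  (forall i, (i <= N)%nat -> 0 <= a i) -> sum_f_R0 a N = 1 ->
  sum_f_R0 (fun i => a i * x i) N * sum_f_R0 (fun i => a i * x i) N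
  <= sum_f_R0 (fun i => a i * x i * x i) N.
Proof.
  intros Ha Hs. set (s := sum_f_R0 (fun i => a i * x i) N).
  assert (H0 : 0 <= sum_f_R0 (fun i => a i * (x i - s) * (x i - s)) N).
  { apply sum_nonneg. intros i Hi. specialize (Ha i Hi).
    pose proof (Rle_0_sqr (x i - s)) as Hq; unfold Rsqr in Hq.
    rewrite Rmult_assoc; apply Rmult_le_pos; assumption. }
  rewrite (sum_ext _ (fun i => a i * x i * x i + ((-2 * s) * (a i * x i) + (s * s) * a i)))
    in H0 by (intros; ring).
  rewrite sum_add, sum_add, sum_scal, sum_scal, Hs in H0. fold s in H0. nra.
Qed.

Section Main.
Variables (T : Type) (n m : nat) (B : nat -> T -> R) (t : nat -> T).
Hypothesis Hnonneg : forall (i : nat) (x : T), (i <= n)%nat -> 0 <= B i x.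
Hypothesis Hpu : forall x : T, sum_f_R0 (fun i => B i x) n = 1.
Hypothesis Hsupp : forall i : nat, (i <= n)%nat -> exists j : nat, (j <= m)%nat /\ B i (t j) <> 0.

Definition om (i : nat) : R := sum_f_R0 (fun j => B i (t j)) m.

Lemma om_pos i : (i <= n)%nat -> 0 < om i.
Proof.
  intros Hi. destruct (Hsupp i Hi) as [j [Hj Hne]].
  assert (B i (t j) <= om i).
  { unfold om. apply (sum_term (fun j => B i (t j))); auto. }
  assert (0 <= B i (t j)) by auto. lra.
Qed.

Lemma lam_om i : (i <= n)%nat -> lam m B t i * om i = 1.
Proof. intros Hi. unfold lam. fold (om i). apply Rinv_l. pose proof (om_pos i Hi). lra. Qed.

Lemma lam_pos i : (i <= n)%nat -> 0 < lam m B t i.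
Proof. intros Hi. unfold lam. fold (om i). apply Rinv_0_lt_compat, om_pos, Hi. Qed.

Definition Mv (v : nat -> R) (i : nat) : R := sum_f_R0 (fun l => AtA m B t i l * v l) n.
Definition Av (v : nat -> R) (j : nat) : R := sum_f_R0 (fun i => B i (t j) * v i) n.

Lemma Mv_eq v i : Mv v i = sum_f_R0 (fun j => B i (t j) * Av v j) m.
Proof.
  unfold Mv, AtA, Amat, Av.
  rewrite (sum_ext _ (fun l => sum_f_R0 (fun j => B i (t j) * (B l (t j) * v l)) m)).
  - rewrite sum_swap. apply sum_ext. intros j _. rewrite <- sum_scal. reflexivity.
  - intros l _. rewrite <- sum_scal_r. apply sum_ext. intros; ring.
Qed.

Definition beta (x y : nat -> R) : R := sum_f_R0 (fun j => Av x j * Av y j) m.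

Lemma xMy x y : sum_f_R0 (fun i => x i * Mv y i) n = beta x y.
Proof.
  rewrite (sum_ext _ (fun i => sum_f_R0 (fun j => Av y j * (B i (t j) * x i)) m)).
  - rewrite sum_swap. unfold beta. apply sum_ext. intros j _. rewrite sum_scal.
    unfold Av at 2. ring.
  - intros i _. rewrite Mv_eq, <- sum_scal. apply sum_ext. intros; ring.
Qed.

Lemma beta_sym x y : beta x y = beta y x.
Proof. unfold beta. apply sum_ext. intros; ring. Qed.

Definition G (v : nat -> R) (i : nat) : R :=
  sum_f_R0 (fun l => (idm i l - lam m B t i * AtA m B t i l) * v l) n.

Lemma G_eq v i : (i <= n)%nat -> G v i = v i - lam m B t i * Mv v i.
Proof.
  intros Hi. unfold G, Mv.
  rewrite (sum_ext _ (fun l => idm i l * v l + (- lam m B t i) * (AtA m B t i l * v l)))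
    by (intros; ring).
  rewrite sum_add, sum_scal, sum_idm.
  replace (Nat.leb i n) with true by (symmetry; apply Nat.leb_le; lia). ring.
Qed.

Definition ip (x y : nat -> R) : R := sum_f_R0 (fun i => om i * x i * y i) n.

Lemma ip_sym x y : ip x y = ip y x.
Proof. unfold ip. apply sum_ext. intros; ring. Qed.

Lemma ip_G x y : ip x (G y) = ip x y - beta x y.
Proof.
  rewrite <- xMy. unfold ip. rewrite <- sum_sub. apply sum_ext. intros i Hi.
  rewrite G_eq by exact Hi. pose proof (lam_om i Hi) as H.
  replace (om i * x i * (y i - lam m B t i * Mv y i))
    with (om i * x i * y i - (lam m B t i * om i) * (x i * Mv y i)) by ring.
  rewrite H. ring.
Qed.

Lemma ip_G_sym x y : ip (G x) y = ip x (G y).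
Proof. rewrite ip_sym, !ip_G, ip_sym, beta_sym. reflexivity. Qed.

Lemma beta_nonneg w : 0 <= beta w w.
Proof. unfold beta. apply sum_nonneg. intros. apply Rle_0_sqr. Qed.

Lemma ip_nonneg w : 0 <= ip w w.
Proof.
  unfold ip. apply sum_nonneg. intros i Hi. pose proof (om_pos i Hi).
  pose proof (Rle_0_sqr (w i)); unfold Rsqr in *.
  rewrite Rmult_assoc. apply Rmult_le_pos; lra.
Qed.

Lemma beta_le_ip w : beta w w <= ip w w.
Proof.
  unfold beta.
  apply Rle_trans with (sum_f_R0 (fun j => sum_f_R0 (fun i => B i (t j) * w i * w i) n) m).
  - apply sum_le. intros j _. unfold Av. apply jensen; auto.
  - rewrite <- sum_swap. unfold ip, om. apply Req_le. apply sum_ext. intros i _.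
    rewrite <- !sum_scal_r. apply sum_ext. intros; ring.
Qed.

Lemma GG_le w : ip (G w) (G w) <= ip w (G w).
Proof.
  assert (Hdiff : ip w (G w) - ip (G w) (G w) =
     beta w w - sum_f_R0 (fun i => lam m B t i * Mv w i * Mv w i) n).
  { rewrite <- xMy. unfold ip. rewrite <- !sum_sub. apply sum_ext. intros i Hi.
    rewrite G_eq by exact Hi. pose proof (lam_om i Hi) as H.
    set (L := lam m B t i) in *. set (o := om i) in *. set (M := Mv w i) in *.
    replace (o * w i * (w i - L * M) - o * (w i - L * M) * (w i - L * M))
      with ((L * o) * (w i * M) - (L * o) * (L * M * M)) by ring.
    rewrite H. ring. }
  assert (Hle : sum_f_R0 (fun i => lam m B t i * Mv w i * Mv w i) n <= beta w w).
  { apply Rle_trans with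
      (sum_f_R0 (fun i => sum_f_R0 (fun j => B i (t j) * Av w j * Av w j) m) n).
    - apply sum_le. intros i Hi.
      pose proof (lam_pos i Hi) as Hl. pose proof (lam_om i Hi) as Ho.
      set (L := lam m B t i) in *.
      assert (J := jensen (fun j => L * B i (t j)) (Av w) m).
      rewrite (sum_ext (fun j => L * B i (t j) * Av w j) (fun j => L * (B i (t j) * Av w j)))
        in J by (intros; ring).
      rewrite (sum_ext (fun j => L * B i (t j) * Av w j * Av w j)
                 (fun j => L * (B i (t j) * Av w j * Av w j))) in J by (intros; ring).
      rewrite !sum_scal in J. rewrite <- Mv_eq in J.
      assert (J' : L * (L * Mv w i * Mv w i) <= L * sum_f_R0 (fun j => B i (t j) * Av w j * Av w j) m).
      { replace (L * (L * Mv w i * Mv w i)) with (L * Mv w i * (L * Mv w i)) by ring.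
        apply J.
        - intros j Hj. apply Rmult_le_pos; [lra | apply Hnonneg; exact Hi].
        - exact Ho. }
      apply Rmult_le_reg_l in J'; [exact J' | exact Hl].
    - rewrite sum_swap. unfold beta. apply Req_le. apply sum_ext. intros j _.
      rewrite (sum_ext _ (fun i => B i (t j) * (Av w j * Av w j))) by (intros; ring).
      rewrite sum_scal_r, Hpu. ring. }
  lra.
Qed.

Fixpoint xs (x0 : nat -> R) (k : nat) : nat -> R :=
  match k with O => x0 | S k' => G (xs x0 k') end.

Definition aa (x0 : nat -> R) (k : nat) : R := ip x0 (xs x0 k).

Lemma ip_shift x0 i j : ip (xs x0 i) (xs x0 j) = aa x0 (i + j).
Proof.
  revert j. induction i; intros j; simpl.
  - reflexivity.
  - rewrite ip_G_sym. change (G (xs x0 j)) with (xs x0 (S j)). rewrite IHi.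
    f_equal. lia.
Qed.

Lemma aa_props x0 k : 0 <= aa x0 k /\ aa x0 (S k) <= aa x0 k.
Proof.
  destruct (Nat.Even_or_Odd k) as [[p Hp]|[p Hp]]; subst k.
  - replace (2 * p)%nat with (p + p)%nat by lia.
    replace (S (p + p)) with (p + S p)%nat by lia.
    rewrite <- !ip_shift. simpl xs.
    rewrite ip_G. pose proof (ip_nonneg (xs x0 p)). pose proof (beta_nonneg (xs x0 p)). lra.
  - replace (2 * p + 1)%nat with (p + S p)%nat by lia.
    replace (S (p + S p)) with (S p + S p)%nat by lia.
    rewrite <- !ip_shift. simpl xs.
    pose proof (GG_le (xs x0 p)). pose proof (ip_G (xs x0 p) (xs x0 p)). pose proof (beta_le_ip (xs x0 p)). lra.
Qed.


Lemma aa_cv x0 : {l | Un_cv (aa x0) l}.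
Proof.
  apply decreasing_cv.
  - intros k. apply (aa_props x0 k).
  - exists 0. intros x [i ->]. unfold opp_seq. pose proof (proj1 (aa_props x0 i)). lra.
Qed.

Lemma ip_diff x y :
  ip (fun i => x i - y i) (fun i => x i - y i) = ip x x - 2 * ip x y + ip y y.
Proof.
  unfold ip. rewrite <- sum_scal, <- sum_sub, <- sum_add. apply sum_ext. intros; ring.
Qed.

Lemma coord_le x i : (i <= n)%nat -> om i * x i * x i <= ip x x.
Proof.
  intros Hi. unfold ip. apply (sum_term (fun i => om i * x i * x i)); [|exact Hi].
  intros j Hj. pose proof (om_pos j Hj).
  pose proof (Rle_0_sqr (x j)); unfold Rsqr in *.
  rewrite Rmult_assoc. apply Rmult_le_pos; lra.
Qed.

Lemma xs_cauchy x0 i : (i <= n)%nat -> Cauchy_crit (fun k => xs x0 k i).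
Proof.
  intros Hi eps Heps. destruct (aa_cv x0) as [al Hal].
  pose proof (om_pos i Hi) as Ho.
  set (o := om i) in *.
  assert (Hd : 0 < eps * eps * o / 4).
  { apply Rmult_lt_0_compat; [|lra]. apply Rmult_lt_0_compat; [nra|lra]. }
  destruct (Hal _ Hd) as [N HN]. exists N. intros k l Hk Hl.
  assert (H1 := HN (k + k)%nat ltac:(lia)).
  assert (H2 := HN (k + l)%nat ltac:(lia)).
  assert (H3 := HN (l + l)%nat ltac:(lia)).
  unfold R_dist in *.
  apply Rabs_def2 in H1. apply Rabs_def2 in H2. apply Rabs_def2 in H3.
  pose proof (coord_le (fun j => xs x0 k j - xs x0 l j) i Hi) as C.
  rewrite ip_diff, !ip_shift in C. fold o in C.
  set (dd := xs x0 k i - xs x0 l i) in *.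
  assert (Hsq : dd * dd < eps * eps).
  { assert (o * (dd * dd) < o * (eps * eps)) by lra.
    apply Rmult_lt_reg_l in H; lra. }
  apply Rabs_def1; nra.
Qed.

Lemma main_sec (d : nat) (Q P0 : nat -> nat -> R) :
  exists L : nat -> nat -> R,
    forall i c : nat, (i <= n)%nat -> (c < d)%nat ->
      Un_cv (fun k => lspia_seq n m B t Q P0 k i c) (L i c).
Proof.
  destruct (MC.normal_eq_fun n m d (fun j i => B i (t j)) Q) as [U HU].
  set (x0 := fun c i => P0 i c - U c i).
  assert (Hclaim : forall c, (c <= d)%nat -> forall k i, (i <= n)%nat ->
     lspia_seq n m B t Q P0 k i c = U c i + xs (x0 c) k i).
  { intros c Hc k. induction k; intros i Hi.
    - simpl. unfold x0. ring.
    - simpl lspia_seq. unfold lspia_step.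
      rewrite (sum_ext _ (fun l => (idm i l - lam m B t i * AtA m B t i l) * U c l
                 + (idm i l - lam m B t i * AtA m B t i l) * xs (x0 c) k l)).
      2:{ intros l Hl. rewrite IHk by exact Hl. ring. }
      rewrite sum_add.
      change (sum_f_R0 (fun l => (idm i l - lam m B t i * AtA m B t i l) * U c l) n)
        with (G (U c) i).
      change (sum_f_R0 (fun l => (idm i l - lam m B t i * AtA m B t i l) * xs (x0 c) k l) n)
        with (xs (x0 c) (S k) i).
      rewrite G_eq by exact Hi.
      assert (HM : Mv (U c) i = sum_f_R0 (fun j => Amat B t j i * Q j c) m)
        by exact (HU c i Hc Hi).
      rewrite HM. ring. }
  exists (fun i c => match Compare_dec.le_dec i n with
                     | left H => U c i + proj1_sig (R_complete _ (xs_cauchy (x0 c) i H))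
                     | right _ => 0 end).
  intros i c Hi Hc.
  destruct (Compare_dec.le_dec i n) as [H|H]; [|lia].
  destruct (R_complete _ (xs_cauchy (x0 c) i H)) as [l Hl]. simpl.
  intros eps Heps. destruct (Hl eps Heps) as [N HN]. exists N. intros k Hk.
  rewrite Hclaim by lia. unfold R_dist in *.
  replace (U c i + xs (x0 c) k i - (U c i + l)) with (xs (x0 c) k i - l) by ring.
  apply HN; exact Hk.
Qed.

End Main.

Theorem theorem1 (T : Type) (n m d : nat) (B : nat -> T -> R) (t : nat -> T)
  (Q P0 : nat -> nat -> R)
  (Hnm : (n <= m)%nat)
  (Hnonneg : forall (i : nat) (x : T), (i <= n)%nat -> 0 <= B i x)
  (Hpu : forall x : T, sum_f_R0 (fun i => B i x) n = 1)
  (Hsupp : forall i : nat, (i <= n)%nat -> exists j : nat, (j <= m)%nat /\ B i (t j) <> 0)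
  (Hsing : singular n (AtA m B t))
  (Hd : (1 <= d)%nat) :
  exists L : nat -> nat -> R,
    forall i c : nat, (i <= n)%nat -> (c < d)%nat ->
      Un_cv (fun k => lspia_seq n m B t Q P0 k i c) (L i c).
Proof.
  exact (main_sec T n m B t Hnonneg Hpu Hsupp d Q P0).
Qed.
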